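(* Let $\mathcal{C}$ be a small category and let $M,N$ be $k\mathcal{C}$-modules such that $\partial_0^*M\cong\partial_1^*N$ as $k\widetilde{\mathcal{E}}^{\mathcal{C}}_1$-modules, or such that $\partial_0^*M\cong\partial_1^*N$ as $k\widetilde{\mathcal{G}}^{\mathcal{C}}_1$-modules. Then $M$ and $N$ are locally constant.
   Context: A $k\mathcal{C}$-module is a functor to finite-dimensional $k$-vector spaces ($k$ a field); it is locally constant if it sends every morphism to an isomorphism; $F^*M=M\circ F$. $\widetilde{\mathcal{E}}^{\mathcal{C}}_1$ is the category whose objects are all morphisms $u:a\to b$ of $\mathcal{C}$ and whose morphisms $[u]\to[v]$ are commutative squares $(f_0,f_1)$ with $f_1u=vf_0$. $\widetilde{\mathcal{G}}^{\mathcal{C}}_1$ is its subcategory with the same objects whose morphisms $[u]\to[v]$ ($v:c\to d$) are the identities and the pairs $(w\circ u,\;v\circ w)$ for $w:b\to c$. In both, $\partial_0[u]=b$, $\partial_0(f_0,f_1)=f_1$, $\partial_1[u]=a$, $\partial_1(f_0,f_1)=f_0$. *)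

(* Defs.v *)
From mathcomp Require Import all_boot all_algebra.

Set Implicit Arguments.
Unset Strict Implicit.
Unset Printing Implicit Defensive.

Local Open Scope ring_scope.

Record category := Category {
  Ob : Type;
  Hom : Ob -> Ob -> Type;
  idm : forall a, Hom a a;
  comp : forall a b c, Hom b c -> Hom a b -> Hom a c;
  comp_id_l : forall a b (f : Hom a b), comp (idm b) f = f;
  comp_id_r : forall a b (f : Hom a b), comp f (idm a) = f;
  comp_assoc : forall a b c d (h : Hom c d) (g : Hom b c) (f : Hom a b),
      comp h (comp g f) = comp (comp h g) f
}.
Arguments idm {C} a : rename.
Arguments comp {C a b c} g f : rename.

(* Underlying quiver (objects and morphisms): the only data needed to speak
   of representations, pullbacks and natural isomorphisms. *)
Record quiver := Quiver { qOb : Type; qHom : qOb -> qOb -> Type }.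
Arguments qHom {q} x y : rename.
Definition quiver_of (C : category) : quiver := @Quiver (Ob C) (@Hom C).

(* A representation: to each object a space k^(rdim x); to each morphism
   f : x -> y a matrix acting on ROW vectors  v |-> v *m ract f. *)
Record rep (k : fieldType) (Q : quiver) := Rep {
  rdim : qOb Q -> nat;
  ract : forall x y, qHom x y -> 'M[k]_(rdim x, rdim y)
}.
Arguments ract {k Q} r {x y} f : rename.

Definition invertible_mx (k : fieldType) m n (A : 'M[k]_(m, n)) : Prop :=
  exists B : 'M[k]_(n, m), A *m B = 1%:M /\ B *m A = 1%:M.

(* kC-module = functor C -> finite-dimensional k-vector spaces *)
Definition is_module (k : fieldType) (C : category) (M : rep k (quiver_of C)) : Prop :=
  (forall a : Ob C, ract M (idm a) = 1%:M) /\
  (forall (a b c : Ob C) (g : Hom b c) (f : Hom a b),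
      ract M (comp g f) = ract M f *m ract M g).

Definition locally_constant (k : fieldType) (C : category) (M : rep k (quiver_of C)) : Prop :=
  forall (a b : Ob C) (f : Hom a b), invertible_mx (ract M f).

Definition rep_iso (k : fieldType) (Q : quiver) (M N : rep k Q) : Prop :=
  exists eta : forall x : qOb Q, 'M[k]_(rdim M x, rdim N x),
    (forall x, invertible_mx (eta x)) /\
    (forall (x y : qOb Q) (f : qHom x y), ract M f *m eta y = eta x *m ract N f).

(* maps of quivers (underlying data of functors) and pullback F^* M = M o F *)
Record qmorph (P Q : quiver) := QMorph {
  qmap_ob : qOb P -> qOb Q;
  qmap_hom : forall x y, qHom x y -> qHom (qmap_ob x) (qmap_ob y)
}.
Arguments qmap_hom {P Q} F {x y} f : rename.

Definition pullback (k : fieldType) (P Q : quiver) (F : qmorph P Q) (M : rep k Q) : rep k P :=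
  @Rep k P (fun x => rdim M (qmap_ob F x)) (fun x y f => ract M (qmap_hom F f)).

Record arrow (C : category) := Arrow { asrc : Ob C; atgt : Ob C; arr : Hom asrc atgt }.
Arguments asrc {C} u : rename.
Arguments atgt {C} u : rename.
Arguments arr {C} u : rename.

Definition square_pair (C : category) (u v : arrow C) : Type :=
  (Hom (asrc u) (asrc v) * Hom (atgt u) (atgt v))%type.

Definition EHom (C : category) (u v : arrow C) : Type :=
  { p : square_pair u v | comp p.2 (arr u) = comp (arr v) p.1 }.

Definition Etilde (C : category) : quiver := @Quiver (arrow C) (@EHom C).

(* (f0,f1) : [u] -> [v] is in G~ iff it is the identity of [u] (so [v] = [u]),
   or it is (w o u, v o w) for some w : b -> c. *)
Definition Gpred (C : category) (u v : arrow C) (p : square_pair u v) : Prop :=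
  existT (fun v' => square_pair u v') v p = existT (fun v' => square_pair u v') u (idm _, idm _)
  \/ exists w : Hom (atgt u) (asrc v), p = (comp w (arr u), comp (arr v) w).

Definition GHom (C : category) (u v : arrow C) : Type :=
  { p : EHom u v | Gpred (proj1_sig p) }.

Definition Gtilde (C : category) : quiver := @Quiver (arrow C) (@GHom C).

Definition d0E (C : category) : qmorph (Etilde C) (quiver_of C) :=
  @QMorph (Etilde C) (quiver_of C) (fun u => atgt u) (fun u v p => (proj1_sig p).2).
Definition d1E (C : category) : qmorph (Etilde C) (quiver_of C) :=
  @QMorph (Etilde C) (quiver_of C) (fun u => asrc u) (fun u v p => (proj1_sig p).1).
Definition d0G (C : category) : qmorph (Gtilde C) (quiver_of C) :=
  @QMorph (Gtilde C) (quiver_of C) (fun u => atgt u) (fun u v p => (proj1_sig (proj1_sig p)).2).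
Definition d1G (C : category) : qmorph (Gtilde C) (quiver_of C) :=
  @QMorph (Gtilde C) (quiver_of C) (fun u => asrc u) (fun u v p => (proj1_sig (proj1_sig p)).1).

(* Main.v *)
Require Import Defs.
From mathcomp Require Import all_boot all_algebra.

Local Open Scope ring_scope.

Lemma inv_mul (k : fieldType) m n p (A : 'M[k]_(m, n)) (B : 'M[k]_(n, p)) :
  invertible_mx A -> invertible_mx B -> invertible_mx (A *m B).
Proof.
move=> [A' [h1 h2]] [B' [h3 h4]]; exists (B' *m A'); split.
- by rewrite mulmxA -(mulmxA A) h3 mulmx1 h1.
- by rewrite mulmxA -(mulmxA B') h2 mulmx1 h4.
Qed.

Lemma inv_inv (k : fieldType) m n (A : 'M[k]_(m, n)) (A' : 'M[k]_(n, m)) :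
  A *m A' = 1%:M -> A' *m A = 1%:M -> invertible_mx A'.
Proof. by move=> h1 h2; exists A. Qed.

Lemma key (k : fieldType) (C : category) (M N : rep k (quiver_of C))
  (eta : forall u : arrow C, 'M[k]_(rdim M (atgt u), rdim N (asrc u))) :
  is_module M -> is_module N ->
  (forall u, invertible_mx (eta u)) ->
  (forall u v (w : Defs.Hom (atgt u) (asrc v)),
     ract M (Defs.comp (arr v) w) *m eta v = eta u *m ract N (Defs.comp w (arr u))) ->
  locally_constant M /\ locally_constant N.
Proof.
move=> [M1 _] [N1 _] Hi Hn.
have E1 : forall a b (f : Defs.Hom a b),
    ract M f *m eta (Arrow f) = eta (Arrow (idm a)).
  move=> a b f; have := Hn (Arrow (idm a)) (Arrow f) (idm a).
  by rewrite /= comp_id_r comp_id_l N1 mulmx1.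
have E2 : forall a b (f : Defs.Hom a b),
    eta (Arrow (idm b)) = eta (Arrow f) *m ract N f.
  move=> a b f; have := Hn (Arrow f) (Arrow (idm b)) (idm b).
  by rewrite /= comp_id_r comp_id_l M1 mul1mx.
split=> a b f.
- have [B [h1 h2]] := Hi (Arrow f).
  have -> : ract M f = eta (Arrow (idm a)) *m B.
    by rewrite -(E1 a b f) -mulmxA h1 mulmx1.
  have HB : invertible_mx B by exists (eta (Arrow f)); split.
  exact (@inv_mul _ _ _ _ _ _ (Hi (Arrow (idm a))) HB).
- have [B [h1 h2]] := Hi (Arrow f).
  have -> : ract N f = B *m eta (Arrow (idm b)).
    by rewrite (E2 a b f) mulmxA h2 mul1mx.
  have HB : invertible_mx B by exists (eta (Arrow f)); split.
  exact (@inv_mul _ _ _ _ _ _ HB (Hi (Arrow (idm b)))).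
Qed.

Theorem lemma3p9 (k : fieldType) (C : category) (M N : rep k (quiver_of C)) :
  is_module M -> is_module N ->
  (rep_iso (pullback (d0E C) M) (pullback (d1E C) N) \/
   rep_iso (pullback (d0G C) M) (pullback (d1G C) N)) ->
  locally_constant M /\ locally_constant N.
Proof.
move=> HM HN [[eta [Hi Hn]]|[eta [Hi Hn]]].
- apply: (@key k C M N eta HM HN Hi) => u v w.
  have pf : Defs.comp (Defs.comp (arr v) w) (arr u) = Defs.comp (arr v) (Defs.comp w (arr u)).
    by rewrite comp_assoc.
  exact: (Hn u v (exist _ (Defs.comp w (arr u), Defs.comp (arr v) w) pf)).
- apply: (@key k C M N eta HM HN Hi) => u v w.
  have pf : Defs.comp (Defs.comp (arr v) w) (arr u) = Defs.comp (arr v) (Defs.comp w (arr u)).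
    by rewrite comp_assoc.
  have g : Gpred (C:=C) (u:=u) (v:=v) (Defs.comp w (arr u), Defs.comp (arr v) w).
    by right; exists w.
  exact: (Hn u v (exist _ (exist _ (Defs.comp w (arr u), Defs.comp (arr v) w) pf) g)).
Qed.
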